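(* Let $U$ be a machine such that for every machine $V$ there exists a total computable length-bounded function $h$ such that $U(h(x))=V(x)$ whenever $V(x)$ is defined (with no requirement on $U(h(x))$ when $V(x)$ is undefined). Then $U$ is effectively optimal.
   Context: A machine is a partial computable function from binary strings to binary strings. A total function $h$ on strings is length-bounded if $|h(x)|\le|x|+c$ for some $c$ and all $x$. $U$ is effectively optimal if for every machine $V$ there is a total computable length-bounded $h$ with $V(x)=U(h(x))$ for all $x$ (both sides undefined, or both defined and equal). *)

(* Defs.v *)
(* A model of computation: partial (mu-)recursive functions on
   nat, with binary strings encoded by the bijective base-2 numbering. *)
From Stdlib Require Import Arith List.
Import ListNotations.

Inductive prf : Type :=
| PZero : prf
| PSucc : prf
| PProj : nat -> prf
| PComp : prf -> list prf -> prf
| PRec  : prf -> prf -> prf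
| PMin  : prf -> prf.

Inductive eval : prf -> list nat -> nat -> Prop :=
| ev_zero : forall v, eval PZero v 0
| ev_succ : forall v, eval PSucc v (S (hd 0 v))
| ev_proj : forall i v, eval (PProj i) v (nth i v 0)
| ev_comp : forall f gs v ws y,
    evals gs v ws -> eval f ws y -> eval (PComp f gs) v y
| ev_rec0 : forall f g rest y,
    eval f rest y -> eval (PRec f g) (0 :: rest) y
| ev_recS : forall f g n rest z y,
    eval (PRec f g) (n :: rest) z -> eval g (n :: z :: rest) y ->
    eval (PRec f g) (S n :: rest) y
| ev_min : forall f v n,
    eval f (n :: v) 0 ->
    (forall m, m < n -> exists k, eval f (m :: v) (S k)) ->
    eval (PMin f) v n
with evals : list prf -> list nat -> list nat -> Prop :=
| evs_nil : forall v, evals [] v []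
| evs_cons : forall g gs v w ws,
    eval g v w -> evals gs v ws -> evals (g :: gs) v (w :: ws).

Definition bstring := list bool.

Fixpoint code (s : bstring) : nat :=
  match s with
  | [] => 0
  | b :: s' => 2 * code s' + 1 + (if b then 1 else 0)
  end.

Definition machine (M : bstring -> option bstring) : Prop :=
  exists e : prf, forall x y, M x = Some y <-> eval e [code x] (code y).

Definition total_computable (h : bstring -> bstring) : Prop :=
  exists e : prf, forall x, eval e [code x] (code (h x)).

Definition length_bounded (h : bstring -> bstring) : Prop :=
  exists c : nat, forall x, length (h x) <= length x + c.

Definition effectively_optimal (U : bstring -> option bstring) : Prop :=
  forall V, machine V ->
    exists h, total_computable h /\ length_bounded h /\
      forall x, V x = U (h x).

(* Main.v *)
Require Import Defs.
From Stdlib Require Import Arith List Lia ClassicalEpsilon Classical.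
Import ListNotations.


Definition rep (F : list nat -> nat) := exists e, forall v, eval e v (F v).

Lemma rep_ext F G : rep F -> (forall v, F v = G v) -> rep G.
Proof. intros [e He] H; exists e; intro v; rewrite <- H; auto. Qed.

Lemma rep_proj i : rep (fun v => nth i v 0).
Proof. exists (PProj i); intro; constructor. Qed.

Lemma rep_const n : rep (fun _ => n).
Proof.
  induction n.
  - exists PZero; intro; constructor.
  - destruct IHn as [e He]. exists (PComp PSucc [e]); intro v.
    econstructor. constructor. apply He. constructor. apply ev_succ.
Qed.

Definition rep1 f := rep (fun v => f (nth 0 v 0)).
Definition rep2 f := rep (fun v => f (nth 0 v 0) (nth 1 v 0)).
Definition rep3 f := rep (fun v => f (nth 0 v 0) (nth 1 v 0) (nth 2 v 0)).
Definition rep4 f := rep (fun v => f (nth 0 v 0) (nth 1 v 0) (nth 2 v 0) (nth 3 v 0)).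
Definition rep5 f := rep (fun v => f (nth 0 v 0) (nth 1 v 0) (nth 2 v 0) (nth 3 v 0) (nth 4 v 0)).

Lemma rep_c1 f A : rep1 f -> rep A -> rep (fun v => f (A v)).
Proof. intros [e He] [a Ha]. exists (PComp e [a]); intro v.
  econstructor. constructor. apply Ha. constructor. apply (He [A v]). Qed.
Lemma rep_c2 f A B : rep2 f -> rep A -> rep B -> rep (fun v => f (A v) (B v)).
Proof. intros [e He] [a Ha] [b Hb]. exists (PComp e [a;b]); intro v.
  econstructor. constructor. apply Ha. constructor. apply Hb. constructor. apply (He [A v; B v]). Qed.
Lemma rep_c3 f A B C : rep3 f -> rep A -> rep B -> rep C -> rep (fun v => f (A v) (B v) (C v)).
Proof. intros [e He] [a Ha] [b Hb] [c Hc]. exists (PComp e [a;b;c]); intro v.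
  econstructor. repeat (constructor; [eauto|]). constructor. apply (He [A v; B v; C v]). Qed.
Lemma rep_c4 f A B C D : rep4 f -> rep A -> rep B -> rep C -> rep D -> rep (fun v => f (A v) (B v) (C v) (D v)).
Proof. intros [e He] [a Ha] [b Hb] [c Hc] [d Hd]. exists (PComp e [a;b;c;d]); intro v.
  econstructor. repeat (constructor; [eauto|]). constructor. apply (He [A v; B v; C v; D v]). Qed.
Lemma rep_c5 f A B C D E : rep5 f -> rep A -> rep B -> rep C -> rep D -> rep E -> rep (fun v => f (A v) (B v) (C v) (D v) (E v)).
Proof. intros [e He] [a Ha] [b Hb] [c Hc] [d Hd] [g Hg]. exists (PComp e [a;b;c;d;g]); intro v.
  econstructor. repeat (constructor; [eauto|]). constructor. apply (He [A v; B v; C v; D v; E v]). Qed.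

Fixpoint primrec (b : nat -> nat -> nat -> nat) (s : nat -> nat -> nat -> nat -> nat -> nat)
  (n p1 p2 p3 : nat) : nat :=
  match n with 0 => b p1 p2 p3 | S i => s i (primrec b s i p1 p2 p3) p1 p2 p3 end.

Lemma rep_primrec b s : rep3 b -> rep5 s -> rep4 (primrec b s).
Proof.
  intros [eb Hb] [es Hs]. exists (PComp (PRec eb es) [PProj 0; PProj 1; PProj 2; PProj 3]).
  intro v. econstructor. repeat (constructor; [constructor|]). constructor.
  simpl. set (p1 := nth 1 v 0). set (p2 := nth 2 v 0). set (p3 := nth 3 v 0).
  induction (nth 0 v 0) as [|i IH]; simpl.
  - constructor. apply (Hb [p1;p2;p3]).
  - econstructor. apply IH. apply (Hs [i; primrec b s i p1 p2 p3; p1; p2; p3]).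
Qed.

Lemma rep_pr b s A B C D : rep3 b -> rep5 s -> rep A -> rep B -> rep C -> rep D ->
  rep (fun v => primrec b s (A v) (B v) (C v) (D v)).
Proof. intros; apply rep_c4; auto. apply rep_primrec; auto. Qed.

Create HintDb repdb.

Ltac rp :=
  match goal with
  | |- rep (fun _ => ?c) => apply rep_const
  | |- rep (fun v => nth ?i v 0) => apply rep_proj
  | |- rep (fun v => primrec ?b ?s (@?A v) (@?B v) (@?C v) (@?D v)) =>
      refine (rep_pr b s A B C D _ _ _ _ _ _);
      [unfold rep3; cbv beta; rp | unfold rep5; cbv beta; rp | rp | rp | rp | rp]
  | |- rep (fun v => ?f (@?A v) (@?B v) (@?C v) (@?D v) (@?E v)) =>
      refine (rep_c5 f A B C D E _ _ _ _ _ _); [solve [eauto with repdb] | rp | rp | rp | rp | rp]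
  | |- rep (fun v => ?f (@?A v) (@?B v) (@?C v) (@?D v)) =>
      refine (rep_c4 f A B C D _ _ _ _ _); [solve [eauto with repdb] | rp | rp | rp | rp]
  | |- rep (fun v => ?f (@?A v) (@?B v) (@?C v)) =>
      refine (rep_c3 f A B C _ _ _ _); [solve [eauto with repdb] | rp | rp | rp]
  | |- rep (fun v => ?f (@?A v) (@?B v)) =>
      refine (rep_c2 f A B _ _ _); [solve [eauto with repdb] | rp | rp]
  | |- rep (fun v => ?f (@?A v)) =>
      refine (rep_c1 f A _ _); [solve [eauto with repdb] | rp]
  end.

Lemma rep_S : rep1 S.
Proof. exists PSucc; intro v; destruct v; constructor. Qed.
#[export] Hint Resolve rep_S : repdb.

Lemma rep_add : rep2 Nat.add.
Proof. unfold rep2. eapply rep_ext with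
  (F := fun v => primrec (fun p1 _ _ => p1) (fun _ z _ _ _ => S z) (nth 0 v 0) (nth 1 v 0) 0 0).
  rp. intro v. induction (nth 0 v 0); simpl; auto. Qed.
#[export] Hint Resolve rep_add : repdb.

Lemma rep_pred : rep1 Nat.pred.
Proof. unfold rep1. eapply rep_ext with
  (F := fun v => primrec (fun _ _ _ => 0) (fun i _ _ _ _ => i) (nth 0 v 0) 0 0 0).
  rp. intro v. destruct (nth 0 v 0); simpl; auto. Qed.
#[export] Hint Resolve rep_pred : repdb.

Lemma rep_sub : rep2 Nat.sub.
Proof. unfold rep2. eapply rep_ext with
  (F := fun v => primrec (fun p1 _ _ => p1) (fun _ z _ _ _ => Nat.pred z) (nth 1 v 0) (nth 0 v 0) 0 0).
  rp. intro v. induction (nth 1 v 0); simpl; [lia| rewrite IHn; lia]. Qed.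
#[export] Hint Resolve rep_sub : repdb.

Lemma rep_mul : rep2 Nat.mul.
Proof. unfold rep2. eapply rep_ext with
  (F := fun v => primrec (fun _ _ _ => 0) (fun _ z p1 _ _ => z + p1) (nth 0 v 0) (nth 1 v 0) 0 0).
  rp. intro v. induction (nth 0 v 0); simpl; [lia| rewrite IHn; lia]. Qed.
#[export] Hint Resolve rep_mul : repdb.

Definition cond (c a b : nat) := match c with 0 => b | S _ => a end.
Lemma rep_cond : rep3 cond.
Proof. unfold rep3. eapply rep_ext with
  (F := fun v => primrec (fun p1 p2 _ => p2) (fun _ _ p1 _ _ => p1) (nth 0 v 0) (nth 1 v 0) (nth 2 v 0) 0).
  rp. intro v. destruct (nth 0 v 0); simpl; auto. Qed.
#[export] Hint Resolve rep_cond : repdb.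

Definition eqn (a b : nat) := if Nat.eqb a b then 1 else 0.
Lemma rep_eqn : rep2 eqn.
Proof. unfold rep2. eapply rep_ext with
  (F := fun v => cond ((nth 0 v 0 - nth 1 v 0) + (nth 1 v 0 - nth 0 v 0)) 0 1).
  rp. intro v. unfold eqn. destruct (Nat.eqb_spec (nth 0 v 0) (nth 1 v 0)).
  rewrite e. replace (_ + _) with 0 by lia. reflexivity.
  destruct (_ + _) eqn:E; [lia|reflexivity]. Qed.
#[export] Hint Resolve rep_eqn : repdb.

Definition leb' (a b : nat) := cond (a - b) 0 1.
Lemma rep_leb : rep2 leb'.
Proof. unfold rep2, leb'. rp. Qed.
#[export] Hint Resolve rep_leb : repdb.
Lemma leb'_spec a b : leb' a b = if Nat.leb a b then 1 else 0.
Proof. unfold leb'. destruct (Nat.leb_spec a b). replace (a-b) with 0 by lia; auto.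
  destruct (a - b) eqn:E; [lia|auto]. Qed.

Fixpoint tri n := match n with 0 => 0 | S i => tri i + S i end.
Lemma rep_tri : rep1 tri.
Proof. unfold rep1. eapply rep_ext with
  (F := fun v => primrec (fun _ _ _ => 0) (fun i z _ _ _ => z + S i) (nth 0 v 0) 0 0 0).
  rp. intro v. induction (nth 0 v 0); simpl; auto. Qed.
#[export] Hint Resolve rep_tri : repdb.

Fixpoint diag z := match z with 0 => 0 | S z' =>
  if Nat.leb (tri (S (diag z'))) (S z') then S (diag z') else diag z' end.
Lemma rep_diag : rep1 diag.
Proof. unfold rep1. eapply rep_ext with
  (F := fun v => primrec (fun _ _ _ => 0) (fun i d _ _ _ => cond (leb' (tri (S d)) (S i)) (S d) d) (nth 0 v 0) 0 0 0).
  rp. intro v. induction (nth 0 v 0) as [|n IHn]; auto.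
  change (cond (leb' (tri (S (primrec (fun _ _ _ : nat => 0)
   (fun i d _ _ _ : nat => cond (leb' (tri (S d)) (S i)) (S d) d) n 0 0 0))) (S n))
   (S (primrec (fun _ _ _ : nat => 0)
   (fun i d _ _ _ : nat => cond (leb' (tri (S d)) (S i)) (S d) d) n 0 0 0))
   (primrec (fun _ _ _ : nat => 0)
   (fun i d _ _ _ : nat => cond (leb' (tri (S d)) (S i)) (S d) d) n 0 0 0) = diag (S n)).
  rewrite IHn, leb'_spec. simpl. destruct (Nat.leb _ _); auto. Qed.
#[export] Hint Resolve rep_diag : repdb.

Lemma diag_spec z : tri (diag z) <= z < tri (S (diag z)).
Proof. induction z; simpl; [lia|]. destruct (Nat.leb_spec (tri (diag z) + S (diag z)) (S z)); simpl in *; lia. Qed.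

Lemma tri_mono a b : a <= b -> tri a <= tri b.
Proof. induction 1; simpl; lia. Qed.

Lemma diag_unique z d : tri d <= z < tri (S d) -> diag z = d.
Proof. intros H. pose proof (diag_spec z).
  destruct (Nat.lt_trichotomy (diag z) d) as [L|[L|L]]; auto.
  - assert (tri (S (diag z)) <= tri d) by (apply tri_mono; lia). lia.
  - assert (tri (S d) <= tri (diag z)) by (apply tri_mono; lia). lia. Qed.

Definition cp a b := tri (a + b) + b.
Definition c2 z := z - tri (diag z).
Definition c1 z := diag z - c2 z.
Lemma rep_cp : rep2 cp. Proof. unfold rep2, cp. rp. Qed.
Lemma rep_c2' : rep1 c2. Proof. unfold rep1, c2. rp. Qed.
Lemma rep_c1' : rep1 c1. Proof. unfold rep1, c1, c2. rp. Qed.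
#[export] Hint Resolve rep_cp rep_c1' rep_c2' : repdb.

Lemma diag_cp a b : diag (cp a b) = a + b.
Proof. apply diag_unique. unfold cp. simpl. lia. Qed.
Lemma c2_cp a b : c2 (cp a b) = b.
Proof. unfold c2. rewrite diag_cp. unfold cp. lia. Qed.
Lemma c1_cp a b : c1 (cp a b) = a.
Proof. unfold c1. rewrite c2_cp, diag_cp. lia. Qed.
Lemma c1_0 : c1 0 = 0. Proof. reflexivity. Qed.
Lemma c2_0 : c2 0 = 0. Proof. reflexivity. Qed.
Lemma cp_inj a b a' b' : cp a b = cp a' b' -> a = a' /\ b = b'.
Proof. intro H. split. rewrite <- (c1_cp a b), <- (c1_cp a' b'), H; auto.
  rewrite <- (c2_cp a b), <- (c2_cp a' b'), H; auto. Qed.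
Global Opaque cp c1 c2.


Fixpoint par n := match n with 0 => 0 | S n => 1 - par n end.
Lemma rep_par : rep1 par.
Proof. unfold rep1. eapply rep_ext with
  (F := fun v => primrec (fun _ _ _ => 0) (fun _ z _ _ _ => 1 - z) (nth 0 v 0) 0 0 0).
  rp. intro v. induction (nth 0 v 0) as [|n IH]; [reflexivity| cbn [primrec]; rewrite IH; reflexivity]. Qed.
#[export] Hint Resolve rep_par : repdb.
Fixpoint dv2 n := match n with 0 => 0 | S i => dv2 i + par i end.
Lemma rep_dv2 : rep1 dv2.
Proof. unfold rep1. eapply rep_ext with
  (F := fun v => primrec (fun _ _ _ => 0) (fun i z _ _ _ => z + par i) (nth 0 v 0) 0 0 0).
  rp. intro v. induction (nth 0 v 0) as [|n IH]; [reflexivity| cbn [primrec]; rewrite IH; reflexivity]. Qed.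
#[export] Hint Resolve rep_dv2 : repdb.
Lemma par_le1 x : par x <= 1. Proof. induction x. simpl; lia. change (par (S x)) with (1 - par x). lia. Qed.
Lemma par_SS x : par (S (S x)) = par x. Proof. change (par (S (S x))) with (1 - (1 - par x)). pose proof (par_le1 x). lia. Qed.
Lemma dv2_SS x : dv2 (S (S x)) = S (dv2 x). Proof. change (dv2 (S (S x))) with (dv2 x + par x + (1 - par x)). pose proof (par_le1 x). lia. Qed.
Lemma par_even c : par (2*c) = 0 /\ par (2*c+1) = 1.
Proof. induction c. split; reflexivity.
  replace (2 * S c) with (S (S (2*c))) by lia. replace (S (S (2*c)) + 1) with (S (S (2*c+1))) by lia.
  rewrite !par_SS. auto. Qed.
Lemma dv2_even c : dv2 (2*c) = c /\ dv2 (2*c+1) = c.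
Proof. induction c. split; reflexivity.
  replace (2 * S c) with (S (S (2*c))) by lia. replace (S (S (2*c)) + 1) with (S (S (2*c+1))) by lia.
  rewrite !dv2_SS. destruct IHc; auto. Qed.

Definition consc a l := S (cp a l).
Definition hdc c := c1 (Nat.pred c).
Definition tlc c := c2 (Nat.pred c).
Lemma rep_consc : rep2 consc. Proof. unfold rep2, consc. rp. Qed.
Lemma rep_hdc : rep1 hdc. Proof. unfold rep1, hdc. rp. Qed.
Lemma rep_tlc : rep1 tlc. Proof. unfold rep1, tlc. rp. Qed.
#[export] Hint Resolve rep_consc rep_hdc rep_tlc : repdb.
Lemma hdc_consc a l : hdc (consc a l) = a. Proof. apply c1_cp. Qed.
Lemma tlc_consc a l : tlc (consc a l) = l. Proof. apply c2_cp. Qed.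
Lemma hdc_0 : hdc 0 = 0. Proof. apply c1_0. Qed.
Lemma tlc_0 : tlc 0 = 0. Proof. apply c2_0. Qed.

Fixpoint lc (l : list nat) := match l with [] => 0 | x :: l => consc x (lc l) end.
Definition itl i l := primrec (fun p1 _ _ => p1) (fun _ z _ _ _ => tlc z) i l 0 0.
Definition nthc i l := hdc (itl i l).
Lemma rep_itl : rep2 itl. Proof. unfold rep2, itl. rp. Qed.
#[export] Hint Resolve rep_itl : repdb.
Lemma rep_nthc : rep2 nthc. Proof. unfold rep2, nthc. rp. Qed.
#[export] Hint Resolve rep_itl rep_nthc : repdb.
Lemma skipn_S_tl i (l : list nat) : skipn (S i) l = tl (skipn i l).
Proof. revert l; induction i; intros [|x l]; simpl; auto. exact (IHi l). Qed.
Lemma tlc_lc l : tlc (lc l) = lc (tl l).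
Proof. destruct l; simpl. apply tlc_0. apply tlc_consc. Qed.
Lemma hdc_lc l : hdc (lc l) = hd 0 l.
Proof. destruct l; simpl. apply hdc_0. apply hdc_consc. Qed.
Lemma itl_lc i l : itl i (lc l) = lc (skipn i l).
Proof. induction i. reflexivity.
  change (itl (S i) (lc l)) with (tlc (itl i (lc l))). rewrite IHi, tlc_lc, skipn_S_tl. auto. Qed.
Lemma nth_skipn i (l : list nat) : nth i l 0 = hd 0 (skipn i l).
Proof. revert l; induction i; intros [|x l]; simpl; auto. Qed.
Lemma nthc_lc i l : nthc i (lc l) = nth i l 0.
Proof. unfold nthc. rewrite itl_lc, hdc_lc, nth_skipn. auto. Qed.
Lemma lc_inj l l' : lc l = lc l' -> l = l'.
Proof. revert l'; induction l; intros [|y l'] H; simpl in *; try discriminate; auto.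
  unfold consc in H. injection H as H. apply cp_inj in H as [-> H]. f_equal; auto. Qed.

Fixpoint penc (f : prf) : nat :=
  match f with
  | PZero => cp 0 0
  | PSucc => cp 1 0
  | PProj i => cp 2 i
  | PComp f gs => cp 3 (cp (penc f) (lc (rev ((fix pl l := match l with [] => [] | g :: l => penc g :: pl l end) gs))))
  | PRec f g => cp 4 (cp (penc f) (penc g))
  | PMin f => cp 5 (penc f)
  end.
Lemma penc_comp f gs : penc (PComp f gs) = cp 3 (cp (penc f) (lc (map penc (rev gs)))).
Proof. simpl. rewrite map_rev. do 3 f_equal. Qed.

Inductive frame :=
| FC (f : prf) (t : list prf) (v acc : list nat)
| FR (g : prf) (i n : nat) (rest : list nat)
| FM (f : prf) (m : nat) (v : list nat).
Inductive state := Ev (f : prf) (v : list nat) (K : list frame) | Rt (r : nat) (K : list frame).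

Definition astep (s : state) : state :=
  match s with
  | Ev PZero v K => Rt 0 K
  | Ev PSucc v K => Rt (S (hd 0 v)) K
  | Ev (PProj i) v K => Rt (nth i v 0) K
  | Ev (PComp f gs) v K => match rev gs with [] => Ev f [] K | g :: t => Ev g v (FC f t v [] :: K) end
  | Ev (PRec f g) [] K => s
  | Ev (PRec f g) (n :: rest) K => Ev f rest (FR g 0 n rest :: K)
  | Ev (PMin f) v K => Ev f (0 :: v) (FM f 0 v :: K)
  | Rt r [] => s
  | Rt r (FC f [] v acc :: K) => Ev f (r :: acc) K
  | Rt r (FC f (g :: t) v acc :: K) => Ev g v (FC f t v (r :: acc) :: K)
  | Rt z (FR g i n rest :: K) => if Nat.eqb i n then Rt z K else Ev g (i :: z :: rest) (FR g (S i) n rest :: K)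
  | Rt 0 (FM f m v :: K) => Rt m K
  | Rt (S _) (FM f m v :: K) => Ev f (S m :: v) (FM f (S m) v :: K)
  end.

Fixpoint arun k s := match k with 0 => s | S k => arun k (astep s) end.
Lemma arun_add a b s : arun (a + b) s = arun b (arun a s).
Proof. revert s; induction a; simpl; auto. Qed.

Definition mkEv f v K := cp 0 (cp f (cp v K)).
Definition mkRt r K := cp 1 (cp r K).
Definition mkFC f t v acc := cp 0 (cp f (cp t (cp v acc))).
Definition mkFR g i n rest := cp 1 (cp g (cp i (cp n rest))).
Definition mkFM f m v := cp 2 (cp f (cp m v)).
Lemma rep_mkEv : rep3 mkEv. Proof. unfold rep3, mkEv. rp. Qed.
Lemma rep_mkRt : rep2 mkRt. Proof. unfold rep2, mkRt. rp. Qed.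
Lemma rep_mkFC : rep4 mkFC. Proof. unfold rep4, mkFC. rp. Qed.
Lemma rep_mkFR : rep4 mkFR. Proof. unfold rep4, mkFR. rp. Qed.
Lemma rep_mkFM : rep3 mkFM. Proof. unfold rep3, mkFM. rp. Qed.
#[export] Hint Resolve rep_mkEv rep_mkRt rep_mkFC rep_mkFR rep_mkFM : repdb.

Definition fenc (fr : frame) : nat :=
  match fr with
  | FC f t v acc => mkFC (penc f) (lc (map penc t)) (lc v) (lc acc)
  | FR g i n rest => mkFR (penc g) i n (lc rest)
  | FM f m v => mkFM (penc f) m (lc v)
  end.
Definition kenc K := lc (map fenc K).
Definition senc (s : state) : nat :=
  match s with
  | Ev f v K => mkEv (penc f) (lc v) (kenc K)
  | Rt r K => mkRt r (kenc K)
  end.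

Definition evStep s f v K :=
  cond (eqn (c1 f) 0) (mkRt 0 K)
 (cond (eqn (c1 f) 1) (mkRt (S (hdc v)) K)
 (cond (eqn (c1 f) 2) (mkRt (nthc (c2 f) v) K)
 (cond (eqn (c1 f) 3) (cond (eqn (c2 (c2 f)) 0) (mkEv (c1 (c2 f)) 0 K)
       (mkEv (hdc (c2 (c2 f))) v (consc (mkFC (c1 (c2 f)) (tlc (c2 (c2 f))) v 0) K)))
 (cond (eqn (c1 f) 4) (cond (eqn v 0) s
       (mkEv (c1 (c2 f)) (tlc v) (consc (mkFR (c2 (c2 f)) 0 (hdc v) (tlc v)) K)))
 (cond (eqn (c1 f) 5) (mkEv (c2 f) (consc 0 v) (consc (mkFM (c2 f) 0 v) K)) s))))).

Definition rtStep s r K :=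
  cond (eqn K 0) s
 (cond (eqn (c1 (hdc K)) 0)
    (cond (eqn (c1 (c2 (c2 (hdc K)))) 0)
       (mkEv (c1 (c2 (hdc K))) (consc r (c2 (c2 (c2 (c2 (hdc K)))))) (tlc K))
       (mkEv (hdc (c1 (c2 (c2 (hdc K))))) (c1 (c2 (c2 (c2 (hdc K)))))
          (consc (mkFC (c1 (c2 (hdc K))) (tlc (c1 (c2 (c2 (hdc K))))) (c1 (c2 (c2 (c2 (hdc K)))))
                   (consc r (c2 (c2 (c2 (c2 (hdc K))))))) (tlc K))))
 (cond (eqn (c1 (hdc K)) 1)
    (cond (eqn (c1 (c2 (c2 (hdc K)))) (c1 (c2 (c2 (c2 (hdc K))))))
       (mkRt r (tlc K))
       (mkEv (c1 (c2 (hdc K))) (consc (c1 (c2 (c2 (hdc K)))) (consc r (c2 (c2 (c2 (c2 (hdc K)))))))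
          (consc (mkFR (c1 (c2 (hdc K))) (S (c1 (c2 (c2 (hdc K))))) (c1 (c2 (c2 (c2 (hdc K)))))
                     (c2 (c2 (c2 (c2 (hdc K)))))) (tlc K))))
    (cond (eqn r 0) (mkRt (c1 (c2 (c2 (hdc K)))) (tlc K))
       (mkEv (c1 (c2 (hdc K))) (consc (S (c1 (c2 (c2 (hdc K))))) (c2 (c2 (c2 (hdc K)))))
          (consc (mkFM (c1 (c2 (hdc K))) (S (c1 (c2 (c2 (hdc K))))) (c2 (c2 (c2 (hdc K))))) (tlc K)))))).

Definition nstep s := cond (eqn (c1 s) 0)
  (evStep s (c1 (c2 s)) (c1 (c2 (c2 s))) (c2 (c2 (c2 s))))
  (rtStep s (c1 (c2 s)) (c2 (c2 s))).

Lemma rep_evStep : rep4 evStep. Proof. unfold rep4, evStep. rp. Qed.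
#[export] Hint Resolve rep_evStep : repdb.
Lemma rep_rtStep : rep3 rtStep. Proof. unfold rep3, rtStep. rp. Qed.
#[export] Hint Resolve rep_rtStep : repdb.
Lemma rep_nstep : rep1 nstep. Proof. unfold rep1, nstep. rp. Qed.
#[export] Hint Resolve rep_nstep : repdb.


Lemma kenc_cons fr K : kenc (fr :: K) = consc (fenc fr) (kenc K).
Proof. reflexivity. Qed.
Lemma lc_cons x l : lc (x :: l) = consc x (lc l). Proof. reflexivity. Qed.

Lemma eqn_consc0 a l : eqn (consc a l) 0 = 0. Proof. reflexivity. Qed.
Ltac nsimp := repeat (rewrite ?c1_cp, ?c2_cp, ?hdc_consc, ?tlc_consc, ?nthc_lc, ?hdc_lc, ?tlc_lc, ?kenc_cons, ?lc_cons, ?eqn_consc0; cbn [cond eqn Nat.eqb lc hd tl]).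

Lemma nstep_correct s : nstep (senc s) = senc (astep s).
Proof.
  destruct s as [f v K | r K].
  - unfold nstep, senc, mkEv. nsimp. unfold evStep.
    destruct f as [| | i | f gs | f g | f].
    + simpl penc. nsimp. reflexivity.
    + simpl penc. nsimp. reflexivity.
    + simpl penc. nsimp. reflexivity.
    + rewrite penc_comp. nsimp. simpl astep. destruct (rev gs) as [|g t]; simpl map; nsimp; reflexivity.
    + simpl penc. nsimp. destruct v as [|n rest]; simpl lc; nsimp; reflexivity.
    + simpl penc. nsimp. reflexivity.
  - unfold nstep, senc, mkRt. nsimp. unfold rtStep.
    destruct K as [|fr K]. change (kenc []) with 0. destruct r; reflexivity.
    nsimp. destruct fr as [f t v acc | g i n rest | f m v]; simpl fenc; unfold mkFC, mkFR, mkFM; nsimp.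
    + destruct t as [|g t]; simpl map; nsimp; destruct r; reflexivity.
    + unfold eqn. destruct (Nat.eqb i n) eqn:E; cbn [cond]; nsimp; destruct r; simpl astep; rewrite ?E; reflexivity.
    + destruct r; nsimp; reflexivity.
Qed.


Definition eval_ind2 (P : prf -> list nat -> nat -> Prop) (Q : list prf -> list nat -> list nat -> Prop)
 (hz : forall v, P PZero v 0) (hs : forall v, P PSucc v (S (hd 0 v))) (hp : forall i v, P (PProj i) v (nth i v 0))
 (hc : forall f gs v ws y, evals gs v ws -> Q gs v ws -> eval f ws y -> P f ws y -> P (PComp f gs) v y)
 (hr0 : forall f g rest y, eval f rest y -> P f rest y -> P (PRec f g) (0::rest) y)
 (hrS : forall f g n rest z y, eval (PRec f g) (n::rest) z -> P (PRec f g) (n::rest) z ->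
    eval g (n::z::rest) y -> P g (n::z::rest) y -> P (PRec f g) (S n :: rest) y)
 (hm : forall f v n, eval f (n::v) 0 -> P f (n::v) 0 ->
    (forall m, m < n -> exists k, eval f (m::v) (S k) /\ P f (m::v) (S k)) -> P (PMin f) v n)
 (qn : forall v, Q [] v [])
 (qc : forall g gs v w ws, eval g v w -> P g v w -> evals gs v ws -> Q gs v ws -> Q (g::gs) v (w::ws))
 : forall f v y, eval f v y -> P f v y :=
 fix F f v y (H : eval f v y) {struct H} : P f v y :=
  match H in eval f v y return P f v y with
  | ev_zero v => hz v
  | ev_succ v => hs v
  | ev_proj i v => hp i v
  | ev_comp f gs v ws y Hs Hf => hc f gs v ws y Hs (G gs v ws Hs) Hf (F f ws y Hf)
  | ev_rec0 f g rest y Hf => hr0 f g rest y Hf (F _ _ _ Hf)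
  | ev_recS f g n rest z y H1 H2 => hrS f g n rest z y H1 (F _ _ _ H1) H2 (F _ _ _ H2)
  | ev_min f v n H0 Hl => hm f v n H0 (F _ _ _ H0)
      (fun m Hm => match Hl m Hm with ex_intro _ k Hk => ex_intro _ k (conj Hk (F _ _ _ Hk)) end)
  end
 with G gs v ws (H : evals gs v ws) {struct H} : Q gs v ws :=
  match H in evals gs v ws return Q gs v ws with
  | evs_nil v => qn v
  | evs_cons g gs v w ws Hg Hgs => qc g gs v w ws Hg (F _ _ _ Hg) Hgs (G _ _ _ Hgs)
  end
 for F.

Definition reach s s' := exists k, arun k s = s'.
Lemma reach_refl s : reach s s. Proof. exists 0; auto. Qed.
Lemma reach_trans a b c : reach a b -> reach b c -> reach a c.
Proof. intros [k1 H1] [k2 H2]. exists (k1 + k2). rewrite arun_add, H1; auto. Qed.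
Lemma reach_step s s' : reach (astep s) s' -> reach s s'.
Proof. intros [k H]. exists (S k). auto. Qed.

Lemma astep_FC0 r f v acc K : astep (Rt r (FC f [] v acc :: K)) = Ev f (r::acc) K.
Proof. destruct r; reflexivity. Qed.
Lemma astep_FC1 r f g t v acc K : astep (Rt r (FC f (g::t) v acc :: K)) = Ev g v (FC f t v (r::acc) :: K).
Proof. destruct r; reflexivity. Qed.
Lemma astep_FR r g i n rest K : astep (Rt r (FR g i n rest :: K)) =
  if Nat.eqb i n then Rt r K else Ev g (i :: r :: rest) (FR g (S i) n rest :: K).
Proof. destruct r; reflexivity. Qed.

Definition Rg v g w := forall K, reach (Ev g v K) (Rt w K).

Lemma comp_run f v : forall t ws, Forall2 (Rg v) (rev t) ws -> forall r acc K y,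
  (forall K, reach (Ev f (ws ++ r :: acc) K) (Rt y K)) -> reach (Rt r (FC f t v acc :: K)) (Rt y K).
Proof.
  induction t as [|g t IH]; intros ws HF r acc K y Hf.
  - inversion HF; subst. apply reach_step. rewrite astep_FC0. apply Hf.
  - simpl in HF. apply Forall2_app_inv_l in HF as (ws1 & ws2 & H1 & H2 & ->).
    inversion H2 as [|? w ? ? Hg H3]; subst. inversion H3; subst.
    apply reach_step. rewrite astep_FC1. eapply reach_trans. apply Hg.
    apply (IH ws1 H1). intro K'. rewrite <- app_assoc in Hf. apply Hf.
Qed.

Definition Pf f v y := (forall K, reach (Ev f v K) (Rt y K)) /\
  match f, v with
  | PRec f0 g0, m :: rest => forall n K, m <= n ->
      reach (Ev f0 rest (FR g0 0 n rest :: K)) (Rt y (FR g0 m n rest :: K))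
  | _, _ => True end.

Lemma fwd : forall f v y, eval f v y -> Pf f v y.
Proof.
  apply (eval_ind2 Pf (fun gs v ws => Forall2 (Rg v) gs ws)).
  - intro v; split; auto. intro K. apply reach_step, reach_refl.
  - intro v; split; auto. intro K. apply reach_step, reach_refl.
  - intros i v; split; auto. intro K. apply reach_step, reach_refl.
  - intros f gs v ws y _ HQ _ [Hf _]. split; [|destruct f; auto].
    intro K. apply reach_step. simpl. destruct (rev gs) as [|g t] eqn:E.
    + assert (gs = []) by (rewrite <- (rev_involutive gs), E; auto). subst.
      inversion HQ; subst. apply Hf.
    + assert (gs = rev t ++ [g]) by (rewrite <- (rev_involutive gs), E; auto). subst.
      apply Forall2_app_inv_l in HQ as (ws1 & ws2 & H1 & H2 & ->).
      inversion H2 as [|? w ? ? Hg H3]; subst. inversion H3; subst.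
      eapply reach_trans. apply Hg. eapply comp_run. exact H1.
      intro K'. apply Hf.
  - intros f g rest y _ [Hf _]. split.
    + intro K. apply reach_step. simpl. eapply reach_trans. apply Hf.
      apply reach_step. rewrite astep_FR. simpl. apply reach_refl.
    + intros n K _. apply Hf.
  - intros f g n rest z y _ [_ HR] _ [Hg _].
    assert (A : forall n' K, S n <= n' ->
      reach (Ev f rest (FR g 0 n' rest :: K)) (Rt y (FR g (S n) n' rest :: K))).
    { intros n' K Hn. eapply reach_trans. apply HR. lia.
      apply reach_step. rewrite astep_FR. destruct (Nat.eqb_spec n n'); [lia|]. apply Hg. }
    split; auto. intro K. apply reach_step. simpl. eapply reach_trans. apply A. lia.
    apply reach_step. rewrite astep_FR, Nat.eqb_refl. apply reach_refl.
  - intros f v n _ [H0 _] Hl. split; [|auto]. intro K.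
    assert (A : forall m, m <= n -> reach (Ev f (0::v) (FM f 0 v :: K)) (Ev f (m::v) (FM f m v :: K))).
    { induction m; intro Hm. apply reach_refl.
      eapply reach_trans. apply IHm. lia. destruct (Hl m) as [k [_ [Hk _]]]. lia.
      eapply reach_trans. apply Hk. apply reach_step. simpl. apply reach_refl. }
    apply reach_step. simpl. eapply reach_trans. apply (A n). lia.
    eapply reach_trans. apply H0. apply reach_step. simpl. apply reach_refl.
  - intro; constructor.
  - intros g gs v w ws _ [Hg _] _ HQ. constructor; auto.
Qed.

Inductive loopR (g : prf) : nat -> nat -> list nat -> nat -> nat -> Prop :=
| lr_done : forall n rest r, loopR g n n rest r r
| lr_step : forall i n rest r r' z, i <> n -> eval g (i :: r :: rest) r' ->
    loopR g (S i) n rest r' z -> loopR g i n rest r z.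
Inductive minR (f : prf) : nat -> list nat -> nat -> nat -> Prop :=
| mr0 : forall m v, minR f m v 0 m
| mrS : forall m v k r' n, eval f (S m :: v) r' -> minR f (S m) v r' n -> minR f m v (S k) n.

Fixpoint kont (K : list frame) (r y : nat) : Prop :=
  match K with
  | [] => r = y
  | FC f t v acc :: K => exists ws, evals (rev t) v ws /\ exists r', eval f (ws ++ r :: acc) r' /\ kont K r' y
  | FR g i n rest :: K => exists z, loopR g i n rest r z /\ kont K z y
  | FM f m v :: K => exists n, minR f m v r n /\ kont K n y
  end.
Definition good s y := match s with
  | Ev f v K => exists r, eval f v r /\ kont K r y
  | Rt r K => kont K r y end.

Lemma evals_app gs1 gs2 v ws1 ws2 : evals gs1 v ws1 -> evals gs2 v ws2 -> evals (gs1 ++ gs2) v (ws1 ++ ws2).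
Proof. induction 1; simpl; auto. intro; constructor; auto. Qed.

Lemma loopR_eval f g i n rest r z : loopR g i n rest r z -> eval (PRec f g) (i :: rest) r ->
  eval (PRec f g) (n :: rest) z.
Proof. induction 1; auto. intro. apply IHloopR. econstructor; eauto. Qed.

Lemma minR_eval f m v r n : minR f m v r n -> eval f (m :: v) r ->
  (forall j, j < m -> exists k, eval f (j :: v) (S k)) -> eval (PMin f) v n.
Proof. induction 1; intros He Hl.
  - constructor; auto.
  - apply IHminR; auto. intros j Hj. destruct (Nat.eq_dec j m). subst; eauto. apply Hl; lia. Qed.

Lemma back s y : good (astep s) y -> good s y.
Proof.
  destruct s as [f v K | r K].
  - destruct f as [| | i | f gs | f g | f]; simpl; intro H.
    + eexists; split; [constructor|auto].
    + eexists; split; [constructor|auto].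
    + eexists; split; [constructor|auto].
    + destruct (rev gs) as [|g t] eqn:E.
      * assert (gs = []) by (rewrite <- (rev_involutive gs), E; auto). subst.
        destruct H as [r [Hr Hk]]. exists r; split; auto. econstructor; eauto. constructor.
      * assert (gs = rev t ++ [g]) by (rewrite <- (rev_involutive gs), E; auto). subst.
        destruct H as [w [Hw [ws [Hws [r' [Hf Hk]]]]]]. exists r'; split; auto.
        econstructor; [|exact Hf]. apply evals_app; auto. repeat constructor; auto.
    + destruct v as [|n rest]; [exact H|].
      destruct H as [z0 [Hz0 [z [Hl Hk]]]]. exists z; split; auto.
      eapply loopR_eval; eauto. constructor; auto.
    + destruct H as [r0 [Hr0 [n [Hm Hk]]]]. exists n; split; auto.
      eapply minR_eval; eauto. intros; lia.
  - intro H. destruct K as [|fr K]; [destruct r; exact H|].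
    destruct fr as [f t v acc | g i n rest | f m v].
    + destruct t as [|g t].
      * destruct r; simpl in H |- *; destruct H as [r' [Hr' Hk]]; exists []; (split; [apply evs_nil|eauto]).
      * destruct r; simpl in H |- *; destruct H as [w [Hw [ws [Hws [r' [Hf Hk]]]]]];
        exists (ws ++ [w]); (split; [apply evals_app; auto; repeat constructor; auto|]);
        exists r'; rewrite <- app_assoc; auto.
    + simpl. assert (astep (Rt r (FR g i n rest :: K)) =
        if Nat.eqb i n then Rt r K else Ev g (i :: r :: rest) (FR g (S i) n rest :: K)) as E
        by (destruct r; reflexivity).
      rewrite E in H. destruct (Nat.eqb_spec i n).
      * subst. exists r. split; auto. constructor.
      * destruct H as [r' [Hr' [z [Hl Hk]]]]. exists z. split; auto. econstructor; eauto.
    + destruct r; simpl in H |- *.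
      * exists m; split; auto. constructor.
      * destruct H as [r' [Hr' [n [Hm Hk]]]]. exists n; split; auto. econstructor; eauto.
Qed.

Lemma bwd k s y : arun k s = Rt y [] -> good s y.
Proof. revert s; induction k; intros s H; simpl in H. subst; simpl; auto. apply back, IHk, H. Qed.

Lemma arun_halt k y : arun k (Rt y []) = Rt y [].
Proof. induction k; simpl; auto. destruct y; auto. Qed.


Definition runN k s := primrec (fun p1 _ _ => p1) (fun _ z _ _ _ => nstep z) k s 0 0.
Lemma rep_runN : rep2 runN. Proof. unfold rep2, runN. rp. Qed.
#[export] Hint Resolve rep_runN : repdb.
Lemma runN_senc k s : runN k (senc s) = senc (arun k s).
Proof. induction k. reflexivity. change (runN (S k) (senc s)) with (nstep (runN k (senc s))).
  rewrite IHk, nstep_correct. replace (S k) with (k + 1) by lia. rewrite arun_add. reflexivity. Qed.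

Definition haltv s := cond (eqn (c1 s) 1) (cond (eqn (c2 (c2 s)) 0) (S (c1 (c2 s))) 0) 0.
Lemma rep_haltv : rep1 haltv. Proof. unfold rep1, haltv. rp. Qed.
#[export] Hint Resolve rep_haltv : repdb.
Lemma haltv_senc s : haltv (senc s) = match s with Rt r [] => S r | _ => 0 end.
Proof. destruct s as [f v K| r K]; unfold haltv; simpl senc; unfold mkEv, mkRt; nsimp; auto.
  destruct K; [reflexivity|]. rewrite kenc_cons. nsimp. reflexivity. Qed.

Definition StepN fc vc k := haltv (runN k (mkEv fc vc 0)).
Lemma rep_StepN : rep3 StepN. Proof. unfold rep3, StepN. rp. Qed.
#[export] Hint Resolve rep_StepN : repdb.

Lemma StepN_arun f v k : StepN (penc f) (lc v) k = haltv (senc (arun k (Ev f v []))).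
Proof. unfold StepN. rewrite <- runN_senc. reflexivity. Qed.

Lemma U1 f v y : eval f v y -> exists k0, forall k, k0 <= k -> StepN (penc f) (lc v) k = S y.
Proof. intro H. destruct (proj1 (fwd f v y H) []) as [k0 Hk]. exists k0. intros k Hk0.
  rewrite StepN_arun. replace k with (k0 + (k - k0)) by lia. rewrite arun_add, Hk, arun_halt.
  rewrite haltv_senc. reflexivity. Qed.

Lemma U2 f v k y : StepN (penc f) (lc v) k = S y -> eval f v y.
Proof. rewrite StepN_arun, haltv_senc. destruct (arun k (Ev f v [])) as [|r [|]] eqn:E; try discriminate.
  intro H; injection H as ->. apply bwd in E. simpl in E. destruct E as [r [H1 H2]]. subst; auto. Qed.

Lemma eval_det f v y y' : eval f v y -> eval f v y' -> y = y'.
Proof. intros H1 H2. destruct (U1 _ _ _ H1) as [a Ha]. destruct (U1 _ _ _ H2) as [b Hb].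
  specialize (Ha (a + b)). specialize (Hb (a + b)). assert (S y = S y') by (rewrite <- Ha, <- Hb; lia + auto; lia).
  lia. Qed.


Definition iterg j n := primrec (fun p1 _ _ => p1) (fun _ z _ _ _ => dv2 (z - 2)) j n 0 0.
Lemma rep_iterg : rep2 iterg. Proof. unfold rep2, iterg. rp. Qed.
#[export] Hint Resolve rep_iterg : repdb.
Definition Pfun j n := cond (par (iterg j n)) 0 1.
Definition xcf E n := dv2 (iterg E n - 1).
Definition Qf k E n := cond (StepN E (consc n 0) k) 0 1.
Definition hpf k1 E n := StepN E (consc n 0) k1 - 1.
Definition Rf Vc Uc k k1 E n := cond (StepN Vc (consc (xcf E n) 0) k) 0
  (cond (StepN Uc (consc (hpf k1 E n) 0) k) 0 1).
Definition Outf Vc Uc k2 k1 E n := cond (StepN Vc (consc (xcf E n) 0) k2)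
  (StepN Vc (consc (xcf E n) 0) k2 - 1) (cond (StepN Uc (consc (hpf k1 E n) 0) k2 - 1) 0 1).
Lemma rep_Pfun : rep (fun v => Pfun (nth 0 v 0) (nth 1 v 0)). Proof. unfold Pfun. rp. Qed.
Lemma rep_Qf : rep (fun v => Qf (nth 0 v 0) (nth 1 v 0) (nth 2 v 0)). Proof. unfold Qf. rp. Qed.
Lemma rep_Rf Vc Uc : rep (fun v => Rf Vc Uc (nth 0 v 0) (nth 1 v 0) (nth 2 v 0) (nth 3 v 0)).
Proof. unfold Rf, xcf, hpf. rp. Qed.
Lemma rep_Outf Vc Uc : rep (fun v => Outf Vc Uc (nth 0 v 0) (nth 1 v 0) (nth 2 v 0) (nth 3 v 0)).
Proof. unfold Outf, xcf, hpf. rp. Qed.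

Definition eW eP eQ eR eOut :=
  PComp (PComp (PComp eOut [PMin eR; PProj 0; PProj 1; PProj 2]) [PMin eQ; PProj 0; PProj 1]) [PMin eP; PProj 0].

Lemma ev_min' e F v n : (forall w, eval e w (F w)) -> F (n :: v) = 0 ->
  (forall m, m < n -> F (m :: v) <> 0) -> eval (PMin e) v n.
Proof. intros He H0 Hl. constructor. rewrite <- H0; auto.
  intros m Hm. specialize (Hl m Hm). destruct (F (m :: v)) eqn:E; [lia|]. exists n0. rewrite <- E; auto. Qed.

Lemma eW_run Vc Uc eP eQ eR eOut n E k1 k2 :
  (forall v, eval eP v (Pfun (nth 0 v 0) (nth 1 v 0))) ->
  (forall v, eval eQ v (Qf (nth 0 v 0) (nth 1 v 0) (nth 2 v 0))) ->
  (forall v, eval eR v (Rf Vc Uc (nth 0 v 0) (nth 1 v 0) (nth 2 v 0) (nth 3 v 0))) ->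
  (forall v, eval eOut v (Outf Vc Uc (nth 0 v 0) (nth 1 v 0) (nth 2 v 0) (nth 3 v 0))) ->
  Pfun E n = 0 -> (forall j, j < E -> Pfun j n <> 0) ->
  Qf k1 E n = 0 -> (forall j, j < k1 -> Qf j E n <> 0) ->
  Rf Vc Uc k2 k1 E n = 0 -> (forall j, j < k2 -> Rf Vc Uc j k1 E n <> 0) ->
  eval (eW eP eQ eR eOut) [n] (Outf Vc Uc k2 k1 E n).
Proof.
  intros HP HQ HR HO P0 Pl Q0 Ql R0 Rl. unfold eW.
  econstructor.
  { constructor. eapply ev_min' with (F := fun v => Pfun (nth 0 v 0) (nth 1 v 0)); eauto.
    constructor. constructor. constructor. }
  simpl. econstructor.
  { constructor. eapply ev_min' with (F := fun v => Qf (nth 0 v 0) (nth 1 v 0) (nth 2 v 0)); eauto.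
    repeat (constructor; [constructor|]). constructor. }
  simpl. econstructor.
  { constructor. eapply ev_min' with (F := fun v => Rf Vc Uc (nth 0 v 0) (nth 1 v 0) (nth 2 v 0) (nth 3 v 0)); eauto.
    repeat (constructor; [constructor|]). constructor. }
  simpl. apply (HO [k2; k1; E; n]).
Qed.

Lemma least (F : nat -> nat) k : F k = 0 -> exists m, F m = 0 /\ forall j, j < m -> F j <> 0.
Proof. induction k as [k IH] using lt_wf_ind. intro H.
  destruct (classic (exists j, j < k /\ F j = 0)) as [[j [Hj Fj]]|N].
  - apply (IH j Hj Fj).
  - exists k. split; auto. intros j Hj Fj. apply N; eauto. Qed.

Lemma code_inj s t : code s = code t -> s = t.
Proof. revert t; induction s as [|b s IH]; intros [|c t]; simpl; intro H; try lia; try reflexivity.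
  destruct b, c; try lia; f_equal; apply IH; lia. Qed.
Lemma code_surj n : exists s, code s = n.
Proof. induction n as [n IH] using lt_wf_ind. destruct n. exists []; auto.
  destruct (Nat.Even_or_Odd n) as [[c Hc]|[c Hc]].
  - destruct (IH c) as [s Hs]. lia. exists (false :: s). simpl. lia.
  - destruct (IH c) as [s Hs]. lia. exists (true :: s). simpl. lia. Qed.
Lemma code_app s x : code (s ++ x) = code s + 2 ^ length s * code x.
Proof. induction s as [|b s IH]; simpl. lia. rewrite IH. destruct b; ring. Qed.

Lemma iterg_S j n : iterg (S j) n = dv2 (iterg j n - 2). Proof. reflexivity. Qed.
Lemma iterg_code x m j : iterg j (code (repeat true (m + j) ++ false :: x)) = code (repeat true m ++ false :: x).
Proof. revert m; induction j; intro m. rewrite Nat.add_0_r; reflexivity.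
  rewrite iterg_S. replace (m + S j) with (S m + j) by lia. rewrite IHj. simpl.
  replace (code (repeat true m ++ false :: x) + (code (repeat true m ++ false :: x) + 0) + 1 + 1 - 2)
    with (2 * code (repeat true m ++ false :: x)) by lia. apply dv2_even. Qed.

Definition flipb (r : nat) : bstring := match r with 0 => [false] | _ => [] end.
Lemma code_flipb r : code (flipb r) = cond r 0 1. Proof. destruct r; reflexivity. Qed.
Lemma flipb_ne r : code (flipb r) <> r. Proof. destruct r; simpl; lia. Qed.


Theorem proposition2p9 (U : bstring -> option bstring) :
  machine U ->
  (forall V, machine V ->
     exists h, total_computable h /\ length_bounded h /\
       forall x y, V x = Some y -> U (h x) = Some y) ->
  effectively_optimal U.
Proof.
  intros [eU HU] Hopt V [eV HV].
  set (Vc := penc eV). set (Uc := penc eU).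
  destruct rep_Pfun as [eP HP]. destruct rep_Qf as [eQ HQ].
  destruct (rep_Rf Vc Uc) as [eR HR]. destruct (rep_Outf Vc Uc) as [eO HO].
  set (ew := eW eP eQ eR eO).
  set (W := fun p : bstring =>
    match excluded_middle_informative (exists y, eval ew [code p] (code y)) with
    | left H => Some (proj1_sig (constructive_indefinite_description _ H))
    | right _ => None end).
  assert (HW : forall p y, W p = Some y <-> eval ew [code p] (code y)).
  { intros p y. unfold W. destruct excluded_middle_informative as [H|H].
    - destruct (constructive_indefinite_description _ H) as [y' Hy']. simpl. split.
      + intro E; injection E as <-; auto.
      + intro Hy. f_equal. apply code_inj. eapply eval_det; eauto.
    - split; [discriminate|]. intro Hy. exfalso; eauto. }
  destruct (Hopt W (ex_intro _ ew HW)) as (h0 & [eh Heh] & [c Hc] & Hsim).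
  set (Ec := penc eh). set (pre := repeat true Ec ++ [false]).
  exists (fun x => h0 (pre ++ x)). split; [|split].
  -     assert (RA : rep (fun v => code pre + 2 ^ length pre * nth 0 v 0)) by rp.
    destruct RA as [eA HA]. exists (PComp eh [eA]). intro x.
    econstructor. constructor. apply HA. constructor. simpl. rewrite <- code_app. apply Heh.
  - exists (length pre + c). intro x. specialize (Hc (pre ++ x)). rewrite length_app in Hc. lia.
  - intro x. cbv beta.
    set (p := pre ++ x). set (n := code p).
    assert (Hp : p = repeat true (0 + Ec) ++ false :: x).
    { unfold p, pre. rewrite <- app_assoc. reflexivity. }
    assert (P0 : Pfun Ec n = 0).
    { unfold Pfun, n. rewrite Hp, iterg_code. simpl.
      replace (code x + (code x + 0) + 1 + 0) with (2 * code x + 1) by lia.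
      rewrite (proj2 (par_even _)). reflexivity. }
    assert (Pl : forall j, j < Ec -> Pfun j n <> 0).
    { intros j Hj. unfold Pfun, n. rewrite Hp.
      replace (0 + Ec) with (S (Ec - j - 1) + j) by lia. rewrite iterg_code. simpl.
      match goal with |- context [par (?a + (?a + 0) + 1 + 1)] =>
        replace (a + (a + 0) + 1 + 1) with (2 * (S a)) by lia end.
      rewrite (proj1 (par_even _)). simpl. lia. }
    assert (XC : xcf Ec n = code x).
    { unfold xcf, n. rewrite Hp, iterg_code. simpl.
      replace (code x + (code x + 0) + 1 + 0 - 1) with (2 * code x) by lia. apply dv2_even. }
    set (hv := code (h0 p)).
    assert (Hh : eval eh [n] hv) by apply Heh.
    destruct (U1 _ _ _ Hh) as [k0 Hk0].
    destruct (least (fun k => Qf k Ec n) k0) as [k1 [Q0 Ql]].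
    { unfold Qf. change (consc n 0) with (lc [n]). rewrite Hk0; auto. }
    assert (HP1 : hpf k1 Ec n = hv).
    { unfold Qf in Q0. unfold hpf. change (consc n 0) with (lc [n]) in *.
      destruct (StepN Ec (lc [n]) k1) eqn:E; [discriminate|]. apply U2 in E.
      rewrite (eval_det _ _ _ _ E Hh). lia. }
    assert (RfE : forall k, Rf Vc Uc k k1 Ec n =
       cond (StepN Vc (lc [code x]) k) 0 (cond (StepN Uc (lc [hv]) k) 0 1)).
    { intro k. unfold Rf. rewrite XC, HP1. reflexivity. }
    assert (OutE : forall k, Outf Vc Uc k k1 Ec n =
       cond (StepN Vc (lc [code x]) k) (StepN Vc (lc [code x]) k - 1) (cond (StepN Uc (lc [hv]) k - 1) 0 1)).
    { intro k. unfold Outf. rewrite XC, HP1. reflexivity. }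
    assert (CASE : forall k, Rf Vc Uc k k1 Ec n = 0 -> V x = U (h0 p)).
    { intros k Rk. destruct (least (fun k => Rf Vc Uc k k1 Ec n) k Rk) as [k2 [R0 Rl]].
      pose proof (eW_run Vc Uc eP eQ eR eO n Ec k1 k2 HP HQ HR HO P0 Pl Q0 Ql R0 Rl) as Hrun.
      rewrite OutE in Hrun. rewrite RfE in R0.
      destruct (StepN Vc (lc [code x]) k2) as [|r] eqn:EV.
      - cbn [cond] in R0, Hrun. destruct (StepN Uc (lc [hv]) k2) as [|r] eqn:EU; [cbn in R0; discriminate|].
        cbn [cond] in Hrun. replace (S r - 1) with r in Hrun by lia. rewrite <- code_flipb in Hrun. apply HW in Hrun. apply Hsim in Hrun.
        apply HU in Hrun. apply U2 in EU. exfalso. apply (flipb_ne r). eapply eval_det; eauto.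
      - cbn [cond] in Hrun. replace (S r - 1) with r in Hrun by lia.
        destruct (code_surj r) as [s Hs]. rewrite <- Hs in Hrun, EV. apply U2 in EV.
        apply HW in Hrun. apply Hsim in Hrun. rewrite Hrun. apply HV. exact EV. }
    destruct (classic (exists k, Rf Vc Uc k k1 Ec n = 0)) as [[k Hk]|N].
    + apply (CASE k Hk).
    + destruct (V x) as [y|] eqn:EVx.
      * exfalso. apply HV in EVx. destruct (U1 _ _ _ EVx) as [a Ha]. apply N. exists a.
        rewrite RfE. simpl lc in Ha. change (lc [code x]) with (consc (code x) 0). rewrite Ha; auto.
      * destruct (U (h0 p)) as [z|] eqn:EU; auto. exfalso. apply HU in EU.
        destruct (U1 _ _ _ EU) as [a Ha]. apply N. exists a. rewrite RfE.
        change (lc [hv]) with (consc (code (h0 p)) 0). simpl lc in Ha. rewrite Ha; auto.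
        destruct (StepN Vc _ a); reflexivity.
Qed.
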